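(* Let $\mathcal{P}$ be a uniformly induced Lubell-bounded poset other than $\mathcal{C}_1$. Then $\mathrm{RR}(\vee_2:\mathcal{P})=2e(\mathcal{P})+1$.
   Context: $\mathcal{B}_n$ denotes the Boolean lattice of all subsets of $[n]$ ordered by inclusion; its $k$-th level is $\binom{[n]}{k}$, the family of $k$-element subsets. An induced copy of a poset $\mathcal{P}$ in a poset $\mathcal{Q}$ is the image of an injection $f:\mathcal{P}\to\mathcal{Q}$ with $f(X)\le f(Y)$ iff $X\le Y$; a family is induced $\mathcal{P}$-free if it contains no induced copy of $\mathcal{P}$. $\mathcal{C}_1$ is the one-element poset. $\vee_2$ is the poset on $X_0,X_1,X_2$ with $X_0<X_1$, $X_0<X_2$, $X_1,X_2$ incomparable. $e(\mathcal{P})$ is the largest integer $m$ such that for every $n$, the union of any $m$ consecutive levels of $\mathcal{B}_n$ is induced $\mathcal{P}$-free. For $\mathcal{F}\subseteq\mathcal{B}_n$, $\mathrm{lu}_n(\mathcal{F})=\sum_{F\in\mathcal{F}}\binom{n}{|F|}^{-1}$, and $\mathrm{Lu}_n(\mathcal{P})$ is the maximum of $\mathrm{lu}_n(\mathcal{F})$ over induced $\mathcal{P}$-free $\mathcal{F}\subseteq\mathcal{B}_n$. $\mathcal{P}$ is uniformly induced Lubell-bounded if $e(\mathcal{P})\ge \mathrm{Lu}_n(\mathcal{P})$ for all positive integers $n$. Monochromatic: all sets share a color; rainbow: pairwise distinct colors. $\mathrm{RR}(\mathcal{Q}:\mathcal{P})$ is the smallest $n$ such that every coloring (with any number of colors)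 of the sets of $\mathcal{B}_n$ contains a rainbow induced copy of $\mathcal{Q}$ or a monochromatic induced copy of $\mathcal{P}$. *)

(* Defs.v *)
From HB Require Import structures.
From mathcomp Require Import all_boot all_order all_algebra.
Set Implicit Arguments. Unset Strict Implicit. Unset Printing Implicit Defensive.
Import Order.TTheory GRing.Theory Num.Theory.

(* B_n = {set 'I_n} ordered by \subset.
   A (finite) poset P is a finPOrderType. *)

Section Defs.
Variables (d : Order.disp_t) (P : finPOrderType d).

Definition induced_copy (n : nat) (f : {ffun P -> {set 'I_n}}) : bool :=
  injectiveb f && [forall x : P, forall y : P, (f x \subset f y) == (x <= y)%O].

Definition induced_free (n : nat) (F : {set {set 'I_n}}) : bool :=
  ~~ [exists f : {ffun P -> {set 'I_n}}, induced_copy f && [forall x, f x \in F]].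

Definition levels (n k m : nat) : {set {set 'I_n}} :=
  [set A : {set 'I_n} | k <= #|A| < k + m].

Definition levels_free (m : nat) : Prop :=
  forall n k : nat, induced_free (levels n k m).

Definition is_e (m : nat) : Prop :=
  levels_free m /\ forall m', m < m' -> ~ levels_free m'.

Definition lu (n : nat) (F : {set {set 'I_n}}) : rat :=
  (\sum_(A in F) ('C(n, #|A|)%:R)^-1)%R.

(* Lu_n(P) : maximum of lu over induced P-free families (all values >= 0) *)
Definition Lu (n : nat) : rat :=
  (\big[Num.max/0%R]_(F : {set {set 'I_n}} | induced_free F) lu F)%R.

Definition unif_lubell_bounded : Prop :=
  forall m, is_e m -> forall n, 0 < n -> (Lu n <= m%:R)%R.

(* rainbow induced copy of V_2 in B_n under coloring c: images A0,A1,A2 of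
   X0,X1,X2 with A0 < A1, A0 < A2, A1 and A2 incomparable, distinct colors *)
Definition rainbow_V2 (n : nat) (C : eqType) (c : {set 'I_n} -> C) : Prop :=
  exists A0 A1 A2 : {set 'I_n},
    [/\ A0 \proper A1, A0 \proper A2, ~~ (A1 \subset A2), ~~ (A2 \subset A1)
      & [/\ c A0 != c A1, c A0 != c A2 & c A1 != c A2]].

Definition mono_P (n : nat) (C : eqType) (c : {set 'I_n} -> C) : Prop :=
  exists f : {ffun P -> {set 'I_n}}, induced_copy f /\ forall x y, c (f x) = c (f y).

Definition RR_prop (n : nat) : Prop :=
  forall (C : eqType) (c : {set 'I_n} -> C), rainbow_V2 c \/ mono_P c.

Definition is_RR (N : nat) : Prop :=
  RR_prop N /\ forall n, n < N -> ~ RR_prop n.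

End Defs.

(* Main.v *)
Require Import Defs.
From HB Require Import structures.
From mathcomp Require Import all_boot all_order all_algebra.
From mathcomp Require Import ring lra zify.
From Stdlib Require Import Classical_Prop.
Set Implicit Arguments. Unset Strict Implicit. Unset Printing Implicit Defensive.
Import Order.TTheory GRing.Theory Num.Theory.
Local Open Scope ring_scope.

Section LuLemmas.
Variable n : nat.

Lemma lu_ge0 (F : {set {set 'I_n}}) : 0 <= lu F.
Proof. by apply: sumr_ge0 => A _; rewrite invr_ge0 ler0n. Qed.

Lemma lu_sub (F G : {set {set 'I_n}}) : F \subset G -> lu F <= lu G.
Proof.
move=> sFG; rewrite /lu [X in _ <= X](big_setID F) /= (setIidPr sFG) lerDl.
by apply: sumr_ge0 => A _; rewrite invr_ge0 ler0n.
Qed.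

Lemma lu_U (F G : {set {set 'I_n}}) : lu (F :|: G) <= lu F + lu G.
Proof.
rewrite /lu [X in X <= _](big_setID F) /=.
have -> : (F :|: G) :&: F = F by apply/setIidPr; exact: subsetUl.
have -> : (F :|: G) :\: F = G :\: F by rewrite setDUl setDv set0U.
rewrite lerD2l; apply: (lu_sub (subsetDl G F)).
Qed.

Lemma lu_set1 (A : {set 'I_n}) : lu [set A] = ('C(n, #|A|)%:R)^-1.
Proof. by rewrite /lu big_set1. Qed.

Lemma sum_subsets (I : {set 'I_n}) (f : nat -> rat) :
  \sum_(A : {set 'I_n} | A \subset I) f #|A| = \sum_(k < #|I|.+1) 'C(#|I|, k)%:R * f k.
Proof.
rewrite (partition_big (fun A : {set 'I_n} => (inord #|A| : 'I_(#|I|.+1))) xpredT) //=.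
apply: eq_bigr => k _.
rewrite -cards_draws -sum1_card natr_sum mulr_suml.
rewrite [RHS]big_mkcond /= [LHS]big_mkcond /=.
apply: eq_bigr => A _; rewrite inE.
case sAI: (A \subset I) => //=.
have leA : (#|A| <= #|I|)%N by exact: subset_leq_card.
have -> : (inord #|A| == k) = (#|A| == k).
  apply/eqP/eqP => [<-|h]; first by rewrite inordK.
  by apply: val_inj; rewrite /= inordK h.
by case: eqP => [->|]; rewrite ?mul1r ?mul0r.
Qed.

End LuLemmas.
Lemma inv_bin_split m k : (k <= m)%N ->
  ('C(m, k)%:R : rat)^-1 =
  m.+1%:R / m.+2%:R * (('C(m.+1, k)%:R)^-1 + ('C(m.+1, k.+1)%:R)^-1).
Proof.
move=> km.
have h1 := mul_bin_down m.+1 k. have h2 := mul_bin_diag m.+1 k.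
rewrite /= in h1 h2.
have c0 : ('C(m, k)%:R : rat) != 0 by rewrite pnatr_eq0 -lt0n bin_gt0.
have hA : ('C(m.+1, k)%:R : rat) = m.+1%:R * 'C(m, k)%:R / (m.+1 - k)%:R.
  have d0 : ((m.+1 - k)%:R : rat) != 0 by rewrite pnatr_eq0 subn_eq0 -ltnNge ltnS.
  apply: (mulIf d0); rewrite mulrVK ?unitfE // -!natrM h1 mulnC //.
have hB : ('C(m.+1, k.+1)%:R : rat) = m.+1%:R * 'C(m, k)%:R / k.+1%:R.
  have d1 : (k.+1%:R : rat) != 0 by rewrite pnatr_eq0.
  apply: (mulIf d1).
  rewrite mulrVK ?unitfE // -!natrM h2 mulnC //.
rewrite hA hB natrB; last by apply: leqW.
field.
have kr : (k%:R <= m%:R :> rat) by rewrite ler_nat.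
have k0 : (0 <= k%:R :> rat) := ler0n _ _.
apply/and5P; split => //; apply: lt0r_neq0; lra.
Qed.

Definition Dsum (n u : nat) : rat := \sum_(k < u.+1) 'C(u, k)%:R / 'C(n, k)%:R.

Lemma Dsum_step m u : (u <= m)%N -> Dsum m.+1 u.+1 = m.+2%:R / m.+1%:R * Dsum m u.
Proof.
move=> um.
pose g : nat -> rat := fun j => 'C(u, j)%:R / 'C(m.+1, j)%:R.
pose S2 : rat := \sum_(k < u.+1) ('C(u, k)%:R : rat) / 'C(m.+1, k.+1)%:R.
have eR : m.+2%:R / m.+1%:R * Dsum m u = \sum_(k < u.+1) g k + S2.
  rewrite /Dsum mulr_sumr /S2 -big_split /=; apply: eq_bigr => k _.
  have km : (k <= m)%N by apply: leq_trans um; rewrite -ltnS.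
  have e1 : m.+2%:R / m.+1%:R * (m.+1%:R / m.+2%:R) = 1 :> rat.
    have m0 : (0 <= m%:R :> rat) := ler0n _ _.
    by field; apply/andP; split; apply: lt0r_neq0; lra.
  by rewrite inv_bin_split // /g mulrCA [X in _ * X]mulrA e1 mul1r mulrDr.
have eG : \sum_(k < u.+1) g (k.+1) = \sum_(k < u.+1) g k - 1.
  have h1 : \sum_(i < u.+2) g i = g 0%N + \sum_(i < u.+1) g i.+1.
    by rewrite big_ord_recl.
  have h2 : \sum_(i < u.+2) g i = \sum_(i < u.+1) g i + g u.+1.
    by rewrite big_ord_recr.
  have g0 : g 0%N = 1 by rewrite /g !bin0 divr1.
  have gu : g u.+1 = 0 by rewrite /g bin_small // mul0r.
  rewrite h2 g0 gu addr0 in h1.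
  by rewrite h1 addrC addKr.
rewrite eR /Dsum big_ord_recl /= !bin0 divr1.
have -> : \sum_(i < u.+1) ('C(u.+1, bump 0 i)%:R : rat) / 'C(m.+1, bump 0 i)%:R
        = S2 + \sum_(k < u.+1) g k.+1.
  rewrite /S2 -big_split /=; apply: eq_bigr => k _.
  by rewrite /bump /= add1n binS natrD mulrDl addrC.
move: eG; set T := \sum_(k < u.+1) g k.+1; move=> eG. rewrite eG.
set U := \sum_(k < u.+1) g k.
by rewrite addrCA (addrCA 1) subrr addr0 addrC.
Qed.

Lemma Dsum_eq u n : (u <= n)%N -> Dsum n u = n.+1%:R / (n.+1 - u)%:R.
Proof.
elim: u n => [|u IH] n hun.
  by rewrite /Dsum big_ord1 !bin0 subn0 divr1 divff // pnatr_eq0.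
case: n hun => [//|m] hum.
rewrite Dsum_step // IH // subSS.
field.
have m0 : (0 <= m%:R :> rat) := ler0n _ _.
rewrite pnatr_eq0 subn_eq0 -ltnNge hum /=.
by apply: lt0r_neq0; lra.
Qed.

Section LuCalc.
Variable n : nat.

Lemma lu_pow (I : {set 'I_n}) : lu (powerset I) = n.+1%:R / (n.+1 - #|I|)%:R.
Proof.
rewrite /lu.
have -> : \sum_(A : {set 'I_n} | A \in powerset I) ('C(n, #|A|)%:R : rat)^-1 =
          \sum_(A : {set 'I_n} | A \subset I) ('C(n, #|A|)%:R)^-1.
  by apply: eq_bigl => A; rewrite powersetE.
rewrite (sum_subsets I (fun k => ('C(n, k)%:R)^-1)) -Dsum_eq.
  by rewrite /Dsum; apply: eq_bigr.
by rewrite -[X in (_ <= X)%N](card_ord n) max_card.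
Qed.

Lemma lu_up (I : {set 'I_n}) : lu [set A : {set 'I_n} | I \subset A] = n.+1%:R / (#|I|.+1)%:R.
Proof.
have cI : (#|~: I| = n - #|I|)%N by rewrite cardsCs setCK card_ord.
have leI : (#|I| <= n)%N by rewrite -[X in (_ <= X)%N](card_ord n) max_card.
have -> : (#|I|.+1 = n.+1 - #|~: I|)%N by rewrite cI; lia.
rewrite -lu_pow /lu (reindex_inj (@setC_inj _)) /=.
apply: eq_big => [B|B _]; first by rewrite !inE subsetC.
have leB : (#|B| <= n)%N by rewrite -[X in (_ <= X)%N](card_ord n) max_card.
have -> : #|~: B| = (n - #|B|)%N by have := cardsC B; rewrite card_ord; lia.
by rewrite bin_sub.
Qed.

Lemma lu_T : lu [set: {set 'I_n}] = n.+1%:R.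
Proof.
rewrite -powersetT lu_pow cardsT card_ord subSnn divr1 //.
Qed.

End LuCalc.
Lemma case2_num (e u : nat) : (1 <= u)%N -> (u <= 2 * e)%N ->
  e%:R < (2 * e + 3)%:R - ((2 * e + 2)%:R / (2 * e + 2 - u)%:R + (2 * e + 2)%:R / u.+1%:R) :> rat.
Proof.
move=> u1 ue.
have e1 : (1 <= e)%N by lia.
have hx : (2 <= (2 * e + 2 - u)%:R :> rat) by rewrite (ler_nat _ 2); lia.
have hy : (2 <= u.+1%:R :> rat) by rewrite (ler_nat _ 2); lia.
have hxy : (2 * e + 2 - u)%:R + u.+1%:R = (2 * e + 3)%:R :> rat.
  by rewrite -natrD; congr _%:R; lia.
have he : (1 <= e%:R :> rat) by rewrite (ler_nat _ 1).
have hn : (2 * e + 2)%:R = 2 * e%:R + 2 :> rat by rewrite natrD natrM.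
have hn3 : (2 * e + 3)%:R = 2 * e%:R + 3 :> rat by rewrite natrD natrM.
move: hx hy hxy; set x := (_ - u)%:R; set y := u.+1%:R => hx hy hxy.
have -> : (2 * e + 2)%:R / x + (2 * e + 2)%:R / y = (2 * e + 2)%:R * (x + y) / (x * y).
  field; apply/andP; split; apply: lt0r_neq0; lra.
have xy0 : 0 < x * y by apply: mulr_gt0; lra.
have hp : 0 <= (x - 2) * (y - 2) by apply: mulr_ge0; lra.
rewrite ltrBrDr -ltrBrDl ltr_pdivrMr //.
rewrite hxy hn hn3 in hp *.
nra.
Qed.

Section Main.
Variables (d : Order.disp_t) (P : finPOrderType d).

Lemma lu_D1 n (F : {set {set 'I_n}}) (X : {set 'I_n}) : X \in F ->
  lu F = ('C(n, #|X|)%:R)^-1 + lu (F :\ X).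
Proof. by move=> hX; rewrite /lu (big_setD1 X hX). Qed.

Lemma P_gt1 e : #|P| != 1%N -> is_e P e -> (1 < #|P|)%N.
Proof.
move=> h1 [hfree _]; rewrite ltn_neqAle eq_sym h1 /= lt0n.
apply/negP => /eqP h0.
have := hfree 0%N 0%N; rewrite /induced_free => /negP; apply.
apply/existsP; exists [ffun x : P => (set0 : {set 'I_0})].
have nx : forall x : P, False by move=> x; have := card0_eq h0 x; rewrite !inE.
apply/andP; split; last by apply/forallP => x; case: (nx x).
apply/andP; split; first by apply/injectiveP => x; case: (nx x).
by apply/forallP => x; case: (nx x).
Qed.

Lemma copy_noncst n (f : {ffun P -> {set 'I_n}}) : (1 < #|P|)%N -> induced_copy f ->
  exists x y, f x != f y.
Proof.
move=> /card_gt1P [x [y [_ _ nxy]]] /andP [/injectiveP inj _].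
by exists x, y; apply: contra nxy => /eqP /inj ->.
Qed.

Lemma notfree_of_lu e n (F : {set {set 'I_n}}) :
  unif_lubell_bounded P -> is_e P e -> (0 < n)%N -> e%:R < lu F -> ~~ induced_free P F.
Proof.
move=> hlub he n0 hlt; apply/negP => hF.
have h1 : lu F <= Lu P n.
  rewrite /Lu; exact: (@le_bigmax_cond _ _ _ 0 F _ (fun F => lu F) hF).
have h2 := hlub e he n n0.
by have := lt_le_trans hlt (le_trans h1 h2); rewrite ltxx.
Qed.

Lemma mono_of_notfree n (C : eqType) (c : {set 'I_n} -> C) (a : C) :
  ~~ induced_free P [set A | c A == a] -> mono_P P c.
Proof.
rewrite /induced_free negbK => /existsP [f /andP [hf /forallP hin]].
exists f; split => // x y.
by move: (hin x) (hin y); rewrite !inE => /eqP -> /eqP ->.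
Qed.

End Main.

Section Lower.
Variables (d : Order.disp_t) (P : finPOrderType d).

Lemma card_lt_setT n (A : {set 'I_n}) : A != setT -> (#|A| < n)%N.
Proof.
move=> hA; rewrite -[X in (_ < X)%N](card_ord n) -cardsT.
by apply: proper_card; rewrite properT.
Qed.

Lemma lower e n : (1 < #|P|)%N -> is_e P e -> (n < 2 * e + 1)%N -> ~ RR_prop P n.
Proof.
move=> hP [hfree _] hn hRR.
pose c := fun A : {set 'I_n} => if A == setT then 2%N else if (#|A| < e)%N then 0%N else 1%N.
have cle1 : forall A, A != setT -> (c A <= 1)%N.
  by move=> A hA; rewrite /c (negbTE hA); case: ifP.
case: (hRR nat c) => [[A0 [A1 [A2 [p1 p2 n12 n21 [c01 c02 c12]]]]] | [f [hf hc]]].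
  have h1 : A1 != setT by apply: contra n21 => /eqP ->; exact: subsetT.
  have h2 : A2 != setT by apply: contra n12 => /eqP ->; exact: subsetT.
  have h0 : A0 != setT.
    apply/eqP => e0; move: p1; rewrite e0 properE subsetT /=.
    by move: h1; rewrite -subTset => /negbTE ->.
  move: (cle1 _ h0) (cle1 _ h1) (cle1 _ h2) c01 c02 c12.
  move: (c A0) (c A1) (c A2) => x y z; lia.
have [x0 _] : exists x0 : P, true.
  by move/card_gt1P: hP => [x [_ [_ _ _]]]; exists x.
have key : forall x, c (f x) = c (f x0) by move=> x; apply: hc.
have [v hv] : exists v, c (f x0) = v by exists (c (f x0)).
have vcases : (v = 0 \/ v = 1 \/ v = 2)%N.
  by rewrite -hv /c; case: ifP => _; [|case: ifP => _]; auto.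
case: vcases => [v0|[v1|v2]]; rewrite ?v0 ?v1 ?v2 in hv.
- apply: (negP (hfree n 0%N)); apply/existsP; exists f; rewrite hf /=.
  apply/forallP => x; have := key x; rewrite hv /c inE /=.
  by case: ifP => _ //; case: ifP.
- apply: (negP (hfree n e)); apply/existsP; exists f; rewrite hf /=.
  apply/forallP => x; have := key x; rewrite hv /c inE /=.
  case: eqP => // hT; case: ifP => // hle _.
  move/negbT: hle; rewrite -leqNgt => hle.
  have := card_lt_setT (introN eqP hT); move: hle; move: #|f x| => k; clear -hn; lia.
- have [x [y]] := copy_noncst hP hf; apply/negP; rewrite negbK.
  have hT : forall z, f z = setT.
    move=> z; have := key z; rewrite hv /c.
    by case: eqP => // _; case: ifP.
  by rewrite !hT.
Qed.

End Lower.

Section Upper.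
Variables (d : Order.disp_t) (P : finPOrderType d).

Lemma upper e : (1 < #|P|)%N -> (0 < e)%N -> unif_lubell_bounded P -> is_e P e ->
  RR_prop P (2 * e + 1).
Proof.
move=> hP e0 hlub he C c.
case: (classic (rainbow_V2 c)) => [hr|hnr]; [by left | right].
pose a := c set0.
have fin : forall a' : C, e%:R < lu [set A | c A == a'] -> mono_P P c.
  move=> a' hlt; apply: (@mono_of_notfree _ _ _ _ _ a').
  by apply: (notfree_of_lu hlub he _ hlt); rewrite addn1.
have hcc : forall X Y, c X != a -> c Y != a -> c X != c Y -> X \subset Y \/ Y \subset X.
  move=> X Y hX hY hXY.
  case: (boolP (X \subset Y)) => hxy; first by left.
  case: (boolP (Y \subset X)) => hyx; first by right.
  exfalso; apply: hnr; exists set0, X, Y; split => //.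
  - by rewrite proper0; apply: contra hX => /eqP ->.
  - by rewrite proper0; apply: contra hY => /eqP ->.
  - by split => //; rewrite eq_sym.
pose M X := (c X != a) && (X != setT).
have hT1 : lu [set [set: 'I_(2 * e + 1)]] = 1 by rewrite lu_set1 cardsT card_ord binn invr1.
have hLT := lu_T (2 * e + 1).
have E1 : ((2 * e + 1).+1 = 2 * e + 2)%N by lia.
rewrite E1 in hLT.
have n2 : (2 * e + 2)%:R = 2 * e%:R + 2 :> rat by rewrite natrD natrM.
have n3 : (2 * e + 3)%:R = 2 * e%:R + 3 :> rat by rewrite natrD natrM.
case: (boolP [exists X, exists Y, [&& M X, M Y & c X != c Y]]) =>
   [/existsP [X0 /existsP [Y0 /and3P [hX0 hY0 hXY0]]] | hno].
  pose Xm := [arg min_(X < X0 | M X) #|X|].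
  have [hXm minXm] : M Xm /\ forall X, M X -> (#|Xm| <= #|X|)%N.
    by rewrite /Xm; case: arg_minnP => // X hX hmin; split.
  pose b := c Xm.
  pose J := [set X | [&& M X, c X == b & [forall Y, (M Y && (c Y != b)) ==> (X \subset Y)]]].
  pose I := \bigcup_(X in J) X.
  have XmJ : Xm \in J.
    rewrite inE hXm eqxx /=; apply/forallP => Y; apply/implyP => /andP [hY hYb].
    have hXa : c Xm != a by case/andP: hXm.
    have hYa : c Y != a by case/andP: hY.
    case: (hcc Xm Y hXa hYa _) => //; first by rewrite eq_sym.
    move=> hYX; exfalso.
    have : Y == Xm by rewrite eqEcard hYX minXm.
    by move/eqP => eYX; move: hYb; rewrite eYX eqxx.
  have Ysub : forall Y, M Y -> c Y != b -> I \subset Y.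
    move=> Y hY hYb; rewrite /I; apply/bigcupsP => X; rewrite inE => /and3P [_ _ /forallP /(_ Y)].
    by rewrite hY hYb.
  have [Y1 hY1 hY1b] : exists2 Y1, M Y1 & c Y1 != b.
    case: (eqVneq (c X0) b) => h; last by exists X0.
    by exists Y0 => //; rewrite -h eq_sym.
  have Ipos : (0 < #|I|)%N.
    have hsub : Xm \subset I by rewrite /I; apply: (bigcup_sup Xm XmJ).
    have h0 : Xm != set0 by case/andP: hXm => hXa _; apply: contra hXa => /eqP ->.
    by rewrite -card_gt0 in h0; exact: leq_trans h0 (subset_leq_card hsub).
  have Ilt : (#|I| <= 2 * e)%N.
    have := subset_leq_card (Ysub _ hY1 hY1b).
    have := card_lt_setT (proj2 (andP hY1)); lia.
  have comp : forall Z, c Z != a -> Z \subset I \/ I \subset Z.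
    move=> Z hZa; case: (eqVneq Z setT) => [->|hZT]; first by right; apply: subsetT.
    have hZ : M Z by rewrite /M hZa hZT.
    case: (eqVneq (c Z) b) => hZb; last by right; apply: Ysub.
    case: (boolP (Z \in J)) => hZJ; first by left; rewrite /I; apply: (bigcup_sup Z hZJ).
    right; move: hZJ; rewrite inE hZ hZb eqxx /= negb_forall => /existsP [Y].
    rewrite negb_imply => /andP [/andP [hY hYb] hnZY].
    have hYa : c Y != a by case/andP: hY.
    case: (hcc Z Y hZa hYa _); first by rewrite hZb eq_sym.
      by move=> h; rewrite h in hnZY.
    by move=> hYZ; exact: subset_trans (Ysub _ hY hYb) hYZ.
  have cover : [set: {set 'I_(2 * e + 1)}] \subset
      [set A | c A == a] :|: ((powerset I :\ set0) :|: [set A : {set 'I_(2 * e + 1)} | I \subset A]).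
    apply/subsetP => A _; rewrite !inE.
    case: (eqVneq (c A) a) => //= hAa.
    have hA0 : A != set0 by apply: contra hAa => /eqP ->.
    by rewrite hA0 /=; case: (comp A hAa) => ->; rewrite ?orbT.
  have h := le_trans (lu_sub cover) (le_trans (lu_U _ _) (lerD (lexx _) (lu_U _ _))).
  have hpow := lu_D1 (X := set0) (F := powerset I).
  rewrite inE sub0set cards0 bin0 invr1 in hpow.
  have hp := hpow isT.
  rewrite lu_pow E1 in hp.
  rewrite hLT lu_up E1 in h.
  have hnum := case2_num Ipos Ilt.
  apply: (fin a).
  move: h hp hnum; set la := lu _; set lp := lu _.
  set x := (2 * e + 2)%:R / _; set y := (2 * e + 2)%:R / _.
  rewrite n2 n3 => h hp hnum; lra.
have [b hb] : exists b, forall A, A != setT -> c A = a \/ c A = b.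
  case: (boolP [exists X, M X]) => [/existsP [X0 hX0] | hno2].
    exists (c X0) => A hA; case: (eqVneq (c A) a) => hAa; [by left | right].
    apply/eqP; move: hno; rewrite negb_exists => /forallP /(_ A).
    rewrite negb_exists => /forallP /(_ X0); rewrite hX0 /M hAa hA /= negbK.
    by [].
  exists a => A hA; left; apply/eqP; move: hno2; rewrite negb_exists => /forallP /(_ A).
  by rewrite /M hA andbT negbK.
have cover : [set: {set 'I_(2 * e + 1)}] \subset
    ([set A | c A == a] :|: [set A | c A == b]) :|: [set setT].
  apply/subsetP => A _; rewrite !inE; case: (eqVneq A setT) => [->|hA].
    by rewrite orbT.
  by case: (hb A hA) => ->; rewrite eqxx ?orbT.
have h := le_trans (lu_sub cover) (le_trans (lu_U _ _) (lerD (lu_U _ _) (lexx _))).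
rewrite hLT hT1 n2 in h.
case: (ltrP (e%:R) (lu [set A | c A == a])) => ha; first exact: fin ha.
case: (ltrP (e%:R) (lu [set A | c A == b])) => hb'; first exact: fin hb'.
exfalso; move: h ha hb'; set la := lu _; set lb := lu _ => h ha hb'; lra.
Qed.

End Upper.

Lemma e_pos (d : Order.disp_t) (P : finPOrderType d) e :
  (1 < #|P|)%N -> unif_lubell_bounded P -> is_e P e -> (0 < e)%N.
Proof.
move=> hP hlub he; rewrite lt0n; apply/negP => /eqP e0.
have hfree : induced_free P [set (set0 : {set 'I_1})].
  apply/negP => /existsP [f /andP [hf /forallP hin]].
  have [x [y]] := copy_noncst hP hf.
  by move: (hin x) (hin y); rewrite !inE => /eqP -> /eqP ->; rewrite eqxx.
have h1 := @notfree_of_lu _ P e 1 [set set0] hlub he isT.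
rewrite lu_set1 cards0 bin0 invr1 e0 in h1.
by have := h1 ltr01; rewrite hfree.
Qed.

Local Close Scope ring_scope.

Theorem theorem1p7 (d : Order.disp_t) (P : finPOrderType d) (e : nat) :
  #|P| != 1 ->
  unif_lubell_bounded P ->
  is_e P e ->
  is_RR P (2 * e + 1).
Proof.
move=> h1 hlub he.
have hP := P_gt1 h1 he.
have e0 := e_pos hP hlub he.
split; first exact: upper.
by move=> n hn; exact: lower hP he hn.
Qed.
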